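(* The function $t\mapsto\dot H(t)/\dot I(t)$ is decreasing on $(0,\infty)$.
   Context: $\dot H(t)=\frac{1}{\ln2}\big(te^{-t}-(1-e^{-t})\ln(1-e^{-t})\big)$ and $\dot I(t)=\frac{t^2}{e^t-1}$ for $t>0$ (the entropy in bits and the normalized Fisher information $\lambda^2 I$ of the indicator that a $\mathrm{Poisson}(t)$ variable, $t=p\lambda$, is nonzero). *)

(* Defs.v *)
From Stdlib Require Import Reals.
Open Scope R_scope.

Definition Hdot (t : R) : R :=
  / ln 2 * (t * exp (- t) - (1 - exp (- t)) * ln (1 - exp (- t))).

Definition Idot (t : R) : R := t ^ 2 / (exp t - 1).

(* Main.v *)
Require Import Defs.
From Stdlib Require Import Reals.
Open Scope R_scope.
From Stdlib Require Import Lra.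
From Coquelicot Require Import Coquelicot.

Definition f0 (x:R) := x * / exp x - (1 - / exp x) * ln (1 - / exp x).
Definition Rf (t:R) := f0 t * (exp t - 1) / (ln 2 * t^2).
Definition Fx (a:R) :=
  let u := / exp a in let v := 1 - u in let b := - ln (1 - u) in
  a^2*u^2 - 2*a*u*v - 2*b*v^2 + a*b*v*(1+u).
Definition Dx (a:R) := Fx a / (ln 2 * a^3 * / exp a).

Lemma ln2_pos : 0 < ln 2.
Proof. rewrite <- ln_1. apply ln_increasing; lra. Qed.

Lemma Rf_deriv (x:R) : 0 < x -> is_derive Rf x (Dx x).
Proof.
  intros Hx. unfold Rf, f0, Dx, Fx.
  assert (HE : 1 < exp x) by (rewrite <- exp_0; apply exp_increasing; lra).
  assert (Hu : 0 < / exp x < 1).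
  { split. apply Rinv_0_lt_compat; lra.
    rewrite <- Rinv_1. apply Rinv_lt_contravar; lra. }
  pose proof ln2_pos.
  auto_derive.
  - repeat split; try lra; try (apply Rgt_not_eq; lra).
    apply Rgt_not_eq. apply Rmult_gt_0_compat; try lra. nra.
  - set (L := ln (1 + - / exp x)). unfold Rminus. fold L.
    field. repeat split; try lra; try (apply Rgt_not_eq; lra).
Qed.

Lemma k_pos (a:R) : 0 < a -> 0 < exp a * (a - 1) + 1.
Proof.
  intros Ha.
  destruct (MVT_cor2 (fun t => exp t * (t - 1) + 1) (fun t => t * exp t) 0 a Ha)
    as [c [Hc1 Hc2]].
  { intros c _. apply is_derive_Reals. auto_derive; auto. ring. }
  rewrite exp_0 in Hc1.
  pose proof (exp_pos c).
  assert (0 < c * exp c * (a - 0)) by (apply Rmult_lt_0_compat; [apply Rmult_lt_0_compat|]; lra).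
  lra.
Qed.

Lemma h_pos (a:R) : 0 < a -> 0 < a * exp a + a - 2 * exp a + 2.
Proof.
  intros Ha.
  destruct (MVT_cor2 (fun t => t * exp t + t - 2 * exp t + 2)
              (fun t => exp t * (t - 1) + 1) 0 a Ha) as [c [Hc1 Hc2]].
  { intros c _. apply is_derive_Reals. auto_derive; auto. ring. }
  rewrite exp_0 in Hc1.
  pose proof (k_pos c (proj1 Hc2)).
  assert (0 < (exp c * (c - 1) + 1) * (a - 0)) by (apply Rmult_lt_0_compat; lra).
  lra.
Qed.

Lemma Fx_neg (a:R) : 0 < a -> Fx a < 0.
Proof.
  intros Ha. unfold Fx.
  assert (HE : 1 < exp a) by (rewrite <- exp_0; apply exp_increasing; lra).
  pose proof (exp_ineq1 a ltac:(lra)) as H1.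
  pose proof (h_pos a Ha) as Hh.
  set (E := exp a) in *.
  assert (Hu : 0 < / E < 1).
  { split. apply Rinv_0_lt_compat; lra.
    rewrite <- Rinv_1. apply Rinv_lt_contravar; lra. }
  set (u := / E) in *.
  assert (HuE : u * E = 1) by (unfold u; field; lra).
  set (v := 1 - u).
  assert (Hv : 0 < v) by (unfold v; lra).
  set (b := - ln v).
  assert (Hb : b * v <= u).
  { unfold b. pose proof (exp_ineq1_le (- ln v)) as He.
    rewrite exp_Ropp, exp_ln in He by lra.
    assert (v * / v = 1) by (field; lra).
    assert (v * (1 + - ln v) <= v * / v) by (apply Rmult_le_compat_l; lra).
    unfold v in *. lra. }
  assert (Hc : 0 < a * (1 + u) - 2 * v).
  { unfold v. assert (0 < E * (a * (1 + u) - 2 * (1 - u))) by nra. nra. }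
  assert (Hg : u * (1 + a) < 1).
  { assert (u * (1 + a) < u * E) by (apply Rmult_lt_compat_l; lra). lra. }
  assert (Hbv : b * v * (a * (1+u) - 2*v) <= u * (a * (1+u) - 2*v))
    by (apply Rmult_le_compat_r; lra).
  assert (Hfin : a^2*u^2 - 2*a*u*v + u*(a*(1+u) - 2*v) < 0).
  { unfold v. assert (a^2*u^2 - 2*a*u*(1-u) + u*(a*(1+u) - 2*(1-u))
       = u * ((a+2) * (u*(a+1) - 1))) by ring.
    assert (0 < u * ((a+2) * (1 - u*(a+1)))) by
      (apply Rmult_lt_0_compat; [lra| apply Rmult_lt_0_compat; lra]).
    lra. }
  assert (a*b*v*(1+u) - 2*b*v^2 = b * v * (a * (1+u) - 2*v)) by ring.
  lra.
Qed.

Lemma Dx_neg (a:R) : 0 < a -> Dx a < 0.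
Proof.
  intros Ha. unfold Dx. pose proof (Fx_neg a Ha). pose proof ln2_pos.
  assert (0 < ln 2 * a^3 * / exp a).
  { apply Rmult_lt_0_compat. apply Rmult_lt_0_compat; auto. apply pow_lt; auto.
    apply Rinv_0_lt_compat, exp_pos. }
  unfold Rdiv. assert (0 < / (ln 2 * a ^ 3 * / exp a)) by (apply Rinv_0_lt_compat; auto).
  nra.
Qed.

Lemma Rf_eq (t:R) : 0 < t -> Hdot t / Idot t = Rf t.
Proof.
  intros Ht. unfold Hdot, Idot, Rf, f0.
  assert (HE : 1 < exp t) by (rewrite <- exp_0; apply exp_increasing; lra).
  pose proof ln2_pos.
  rewrite exp_Ropp. field. repeat split; try lra; try (apply Rgt_not_eq; lra).
Qed.

Theorem mainTheorem10 :
  forall s t : R, 0 < s -> s < t -> Hdot t / Idot t < Hdot s / Idot s.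
Proof.
  intros s t Hs Hst.
  rewrite (Rf_eq t) by lra. rewrite (Rf_eq s) by lra.
  destruct (MVT_cor2 Rf Dx s t Hst) as [c [Hc1 Hc2]].
  { intros c Hc. apply is_derive_Reals. apply Rf_deriv. lra. }
  pose proof (Dx_neg c ltac:(lra)). nra.
Qed.
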